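(* Let $k\ge16/(3\sqrt3)$ be real. For $x=e^{i\theta}$ on the unit circle (with $\cos\theta\ne0$) set $$y_{2}(x)=\frac{k-\sqrt{k^2-16\cos^2\theta\,(3-4\cos^2\theta)}}{4\cos\theta}.$$ Then $|y_2(x)|\le1$ for all such $x$.
   Context: $y_2(x)$ is the root of smaller absolute value in $y$ of $(x+x^{-1})y^2-ky-(x^3+x^{-3})=0$ (which equals $-y^3R_k(x/y,1/(xy))$ for $R_k(x,y)=y^3-y+x^3-x+kxy$). Here $\sqrt{\cdot}$ is the principal square root. *)

(* Defs.v *)
From Stdlib Require Import Reals.
Open Scope R_scope.

(* Under k >= 16/(3 sqrt 3) the radicand is positive, so the principal square
   root coincides with the real square root [sqrt]. *)
Definition y2 (k theta : R) : R :=
  (k - sqrt (k ^ 2 - 16 * (cos theta) ^ 2 * (3 - 4 * (cos theta) ^ 2)))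
  / (4 * cos theta).

(* Main.v *)
Require Import Defs.
From Stdlib Require Import Reals Lra Psatz.
Open Scope R_scope.

Theorem lemma3 (k : R) (hk : 16 / (3 * sqrt 3) <= k) (theta : R)
  (hc : cos theta <> 0) :
  Rabs (y2 k theta) <= 1.
Proof.
  unfold y2.
  set (c := cos theta) in *.
  set (rr := sqrt 3) in *.
  assert (hr2 : rr * rr = 3) by (apply sqrt_sqrt; lra).
  assert (hr : 0 < rr) by (apply sqrt_lt_R0; lra).
  assert (hkr : 16 <= 3 * rr * k).
  { apply (Rmult_le_compat_l (3*rr)) in hk; [|lra].
    replace (3 * rr * (16 / (3 * rr))) with 16 in hk by (field; lra). lra. }
  set (aa := Rabs c).
  assert (ha2 : c ^ 2 = aa * aa) by (unfold aa; rewrite <- Rabs_mult, Rabs_right; [ring| nra]).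
  assert (ha : 0 < aa) by (apply Rabs_pos_lt; auto).
  assert (ha1 : aa <= 1) by (unfold aa, c; apply Rabs_le; split; [apply COS_bound | apply COS_bound]).
  rewrite ha2.
  set (D := k ^ 2 - 16 * (aa * aa) * (3 - 4 * (aa * aa))).
  assert (hk0 : 0 < k) by nra.
  assert (hkk : 256 <= 27 * (k * k)) by nra.
  assert (hD : 0 <= D) by (unfold D; assert (0 <= (8*(aa*aa)-3)^2) by apply pow2_ge_0; nra).
  set (s := sqrt D).
  assert (hs2 : s * s = D) by (apply sqrt_sqrt; auto).
  assert (hs0 : 0 <= s) by apply sqrt_pos.
  assert (hpoly : 8 * aa - 8 * aa ^ 3 <= k).
  { assert (0 <= (rr*aa-1)^2 * (rr*aa+2)) by (apply Rmult_le_pos; [apply pow2_ge_0 | assert (0 <= rr*aa) by (apply Rmult_le_pos; lra); lra]).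
    assert (3*rr*aa^3 - 3*rr*aa + 2 = (rr*aa-1)^2*(rr*aa+2)) by (replace ((rr*aa-1)^2*(rr*aa+2)) with (rr*(rr*rr)*aa^3 - 3*rr*aa + 2) by ring; rewrite hr2; ring).
    nra. }
  assert (hDu : D <= (k + 4*aa)*(k+4*aa)).
  { unfold D. assert (aa*aa <= 1) by nra. assert (0 <= aa*k) by nra. nra. }
  assert (hup : s <= k + 4 * aa) by nra.
  assert (hlo : k - 4 * aa <= s).
  { destruct (Rle_dec (k - 4*aa) 0); [lra|].
    assert (hDl : (k - 4*aa)*(k-4*aa) <= D).
    { unfold D. assert (0 < aa*(k - (8*aa - 8*aa^3))+ 0 \/ aa*(k - (8*aa - 8*aa^3)) = 0) by nra.
      assert (0 <= aa*(k - (8*aa - 8*aa^3))) by nra. nra. }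
    nra. }
  unfold Rdiv. rewrite Rabs_mult, Rabs_inv, Rabs_mult.
  rewrite (Rabs_right 4) by lra. fold aa.
  apply (Rmult_le_reg_r (4 * aa)); [lra|].
  rewrite Rmult_assoc, Rinv_l by lra.
  rewrite Rmult_1_r, Rmult_1_l. apply Rabs_le. lra.
Qed.
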